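(* For every integer $\Delta\geq 3$ there exists $\alpha>0$ such that there are infinitely many trees $X$ with maximum degree $\Delta$ with the following property: for every tree $T$ with maximum degree less than $\Delta$, every $T$-partition of $X$ has width at least $|V(X)|^{\alpha}$. Moreover, if $\Delta=3$, then for every $\alpha\in(0,1)$ there are infinitely many trees $X$ with maximum degree $3$ with this property.
   Context: For a graph $G$ and a tree $T$, a $T$-partition of $G$ is a family $(V_x : x\in V(T))$ of pairwise disjoint subsets of $V(G)$ (some possibly empty) with union $V(G)$, indexed by the nodes of $T$, such that for every edge $vw$ of $G$, if $v\in V_x$ and $w\in V_y$ then $x=y$ or $xy\in E(T)$. The width of a $T$-partition is $\max\{|V_x| : x\in V(T)\}$. *)

(* Defs.v *)
From mathcomp Require Import all_boot.
From Stdlib Require Import Reals.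

Set Implicit Arguments.
Unset Strict Implicit.
Unset Printing Implicit Defensive.

Definition simple_graph (V : finType) (e : rel V) : Prop :=
  symmetric e /\ irreflexive e.

Definition degree (V : finType) (e : rel V) (v : V) : nat :=
  #|[set w | e v w]|.

Definition acyclic (V : finType) (e : rel V) : Prop :=
  forall c : seq V, uniq c -> 3 <= size c -> ~~ cycle e c.

Definition connected_graph (V : finType) (e : rel V) : Prop :=
  forall x y : V, connect e x y.

Definition is_tree (V : finType) (e : rel V) : Prop :=
  [/\ simple_graph e, 0 < #|V|, connected_graph e & acyclic e].

Definition max_degree_eq (V : finType) (e : rel V) (d : nat) : Prop :=
  (forall v, degree e v <= d) /\ (exists v, degree e v = d).

Definition max_degree_lt (V : finType) (e : rel V) (d : nat) : Prop :=
  forall v, degree e v < d.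

Definition is_Tpartition (X T : finType) (eX : rel X) (eT : rel T)
    (P : T -> {set X}) : Prop :=
  [/\ (forall s t : T, s != t -> [disjoint P s & P t]),
      (forall v : X, exists t : T, v \in P t) &
      (forall (v w : X) (s t : T),
          eX v w -> v \in P s -> w \in P t -> s = t \/ eT s t)].

Definition width (X T : finType) (P : T -> {set X}) : nat :=
  \max_(t : T) #|P t|.

Definition wide_for (X : finType) (eX : rel X) (d : nat) (alpha : R) : Prop :=
  forall (T : finType) (eT : rel T),
    is_tree eT -> max_degree_lt eT d ->
    forall P : T -> {set X}, is_Tpartition eX eT P ->
      (Rpower (INR #|X|) alpha <= INR (width P))%R.

(* Main.v *)
Require Import Defs.
From mathcomp Require Import all_boot.
Set Implicit Arguments. Unset Strict Implicit. Unset Printing Implicit Defensive.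

Lemma card_bigcup_le (T I : finType) (A : {pred I}) (F : I -> {set T}) :
  #|\bigcup_(i in A) F i| <= \sum_(i in A) #|F i|.
Proof.
elim/big_rec2: _; first by rewrite cards0.
move=> i n S _ h; apply: leq_trans (leq_card_setU _ _) _.
exact: leq_add.
Qed.

Fixpoint ball (T : finType) (e : rel T) (t0 : T) (k : nat) : {set T} :=
  match k with
  | 0 => [set t0]
  | k'.+1 => ball e t0 k' :|: [set u | [exists v in ball e t0 k', e v u]]
  end.

Definition layer (T : finType) (e : rel T) (t0 : T) (k : nat) : {set T} :=
  ball e t0 k.+1 :\: ball e t0 k.

Lemma ballS (T : finType) (e : rel T) t0 k :
  ball e t0 k.+1 = ball e t0 k :|: [set u | [exists v in ball e t0 k, e v u]].
Proof. by []. Qed.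

Lemma ball_sub (T : finType) (e : rel T) t0 k : ball e t0 k \subset ball e t0 k.+1.
Proof. by rewrite /= subsetUl. Qed.

Lemma layer_le (T : finType) (e : rel T) t0 d :
  symmetric e -> (forall v, degree e v <= d) ->
  forall k, #|layer e t0 k| <= d * (d.-1) ^ k.
Proof.
move=> esym hdeg; elim=> [|k IH].
  rewrite expn0 muln1; apply: leq_trans (hdeg t0); apply: subset_leq_card.
  apply/subsetP=> u; rewrite /layer /= !inE => /andP[/negbTE -> /=].
  by move=> /existsP[v /andP[]]; rewrite inE => /eqP->.
set L := layer e t0 k.+1.
have sub : L \subset \bigcup_(v in layer e t0 k) [set u in L | e v u].
  apply/subsetP=> u uL; have := uL; rewrite /L /layer inE => /andP[nu].
  rewrite ballS inE (negbTE nu) /= inE => /existsP[v /andP[vB evu]].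
  apply/bigcupP; exists v; last by rewrite inE uL.
  rewrite /layer inE vB andbT; apply/negP=> vk.
  move: nu; rewrite ballS inE; apply/negP; rewrite negbK; apply/orP; right.
  by rewrite inE; apply/existsP; exists v; rewrite vk.
apply: leq_trans (subset_leq_card sub) _.
apply: leq_trans (card_bigcup_le _ _) _.
have -> : d * d.-1 ^ k.+1 = \sum_(v in layer e t0 k) d.-1 + (d * d.-1 ^ k.+1 - #|layer e t0 k| * d.-1).
  rewrite sum_nat_const subnKC // expnS mulnCA mulnC leq_mul2l IH orbT //.
apply: leq_trans (leq_addr _ _); apply: leq_sum => v.
rewrite /layer inE => /andP[nvk].
rewrite ballS inE (negbTE nvk) /= inE => /existsP[w /andP[wB ewv]].
have : #|[set u | e v u]| <= d by exact: hdeg.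
rewrite (cardsD1 w) inE esym ewv add1n => h.
have dpos : 0 < d by apply: leq_trans h.
apply: (@leq_trans #|[set u | e v u] :\ w|); last by rewrite -ltnS prednK.
apply: subset_leq_card; apply/subsetP=> u /setIdP[uL evu].
rewrite !inE evu andbT; apply/eqP=> uw; move: uL.
by rewrite /L /layer inE uw ballS inE wB.
Qed.

Definition hrel (d n : nat) : rel 'I_n := fun i j =>
  ((0 < j) && ((j : nat).-1 %/ d == i)) || ((0 < i) && ((i : nat).-1 %/ d == j)).

Lemma par_lt d j : 0 < j -> j.-1 %/ d < j.
Proof. by case: j => // j _; rewrite /= ltnS leq_div. Qed.

Lemma hrel_sym d n : symmetric (@hrel d n).
Proof. by move=> i j; rewrite /hrel orbC. Qed.

Lemma hrel_irr d n : irreflexive (@hrel d n).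
Proof.
move=> i; rewrite /hrel orbb; apply/negP=> /andP[i0 /eqP h].
by have := par_lt d i0; rewrite h ltnn.
Qed.

Lemma hrel_lt d n (i j : 'I_n) : hrel d i j -> j < i -> (i : nat).-1 %/ d = j.
Proof.
rewrite /hrel => /orP[/andP[j0 /eqP h] ji|/andP[_ /eqP //]].
by have := par_lt d j0; rewrite h => /(ltn_trans ji); rewrite ltnn.
Qed.

Lemma hconnect d n (z : 'I_n) : z = 0 :> nat -> forall x, connect (@hrel d n) x z.
Proof.
move=> z0.
suff: forall k (x : 'I_n), x < k -> connect (@hrel d n) x z by move=> h x; exact: (h n).
elim=> // k IH x; rewrite ltnS leq_eqVlt => /orP[/eqP xk|]; last exact: IH.
case: (posnP x) => [x0|xpos].
  by have -> : x = z by apply: val_inj; rewrite /= x0 z0.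
have pn : x.-1 %/ d < n by exact: ltn_trans (par_lt d xpos) (ltn_ord x).
apply: connect_trans (IH (Ordinal pn) _); last by rewrite /= -xk par_lt.
by apply: connect1; rewrite /hrel xpos /= eqxx orbT.
Qed.

Lemma seq_max n (s : seq 'I_n) : s != [::] ->
  exists2 m, m \in s & forall x, x \in s -> x <= m.
Proof.
elim: s => // a [|b s] IH _.
  by exists a; rewrite ?inE // => x; rewrite inE => /eqP->.
have [m ms mmax] := IH isT.
case: (leqP a m) => am.
  exists m; first by rewrite inE ms orbT.
  by move=> x; rewrite inE => /orP[/eqP->//|]; exact: mmax.
exists a; first by rewrite inE eqxx.
move=> x; rewrite inE => /orP[/eqP->//|/mmax xm]; exact: leq_trans xm (ltnW am).
Qed.

Lemma hacyclic d n : acyclic (@hrel d n).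
Proof.
move=> c uc sc; apply/negP=> cc.
have [m mc mmax] : exists2 m, m \in c & forall x, x \in c -> x <= m.
  by apply: seq_max; by case: c sc {uc cc}.
have := rot_index mc; set s0 := drop _ _ ++ _ => ec.
have uc' : uniq (m :: s0) by rewrite -ec rot_uniq.
have cc' : cycle (@hrel d n) (m :: s0) by rewrite -ec rot_cycle.
have sc' : 3 <= size (m :: s0) by rewrite -ec size_rot.
have mc' : forall x, x \in m :: s0 -> x <= m by move=> x; rewrite -ec mem_rot; exact: mmax.
move: s0 uc' cc' sc' mc' {ec} => [//|a [//|b s]].
rewrite /= rcons_path => /and4P[nm na _ _] /and4P[ema _ _ ezm] _ mc'.
have lt : forall x, x \in [:: a, b & s] -> x != m -> x < m.
  by move=> x xin xm; rewrite ltn_neqAle xm mc' // inE xin orbT.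
have h1 := hrel_lt ema (lt a (mem_head _ _) (memPn nm a (mem_head _ _))).
rewrite hrel_sym in ezm.
have zin : last b s \in [:: a, b & s] by rewrite inE mem_last orbT.
have h2 := hrel_lt ezm (lt _ zin (memPn nm _ zin)).
have az : a = last b s by by apply: val_inj; rewrite /= -h1 -h2.
by move: na; rewrite az mem_last.
Qed.

Definition hg d n (dpos : 0 < d) (i : 'I_n) (j : 'I_n) : option 'I_d :=
  if (0 < j) && ((j : nat).-1 %/ d == i) then Some (Ordinal (ltn_pmod (j : nat).-1 dpos)) else None.

Lemma hg_inj d n (dpos : 0 < d) (i : 'I_n) :
  {in [set j | hrel d i j] &, injective (hg dpos i)}.
Proof.
move=> j k; rewrite !inE /hg /hrel.
case: ifP => [/andP[j0 /eqP ej] _|jc].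
  case: ifP => [/andP[k0 /eqP ek] _ [] ejk|//].
  apply: val_inj; rewrite /= -(prednK j0) -(prednK k0); congr _.+1.
  by rewrite (divn_eq j.-1 d) (divn_eq k.-1 d) ej ek ejk.
move=> /= /andP[_ /eqP ej].
case: ifP => [//|kc] /= /andP[_ /eqP ek] _.
by apply: val_inj; rewrite /= -ej -ek.
Qed.

Lemma hdeg_le d n (dpos : 0 < d) (i : 'I_n) : degree (@hrel d n) i <= d.+1.
Proof.
rewrite /degree; have := @leq_card_in _ _ _ _ (hg_inj (dpos:=dpos) (i:=i)).
by rewrite card_option card_ord.
Qed.

Lemma hdeg_1 d n (dpos : 0 < d) (h : d.*2 < n) (one : 'I_n) :
  one = 1 :> nat -> degree (@hrel d n) one = d.+1.
Proof.
move=> e1; apply/eqP; rewrite eqn_leq hdeg_le //=.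
rewrite /degree; apply: leq_trans (leq_imset_card (hg dpos one) _).
have -> : d.+1 = #|[set: option 'I_d]| by rewrite cardsT card_option card_ord.
apply: subset_leq_card.
apply/subsetP=> [[k|]] _.
  have jn : d + k + 1 < n.
    by apply: leq_ltn_trans h; rewrite -addnn -addnA addn1 leq_add2l.
  apply/imsetP; exists (Ordinal jn).
    rewrite inE /hrel /= e1 addn1 /= divnDl ?dvdnn // divnn dpos divn_small //.
  rewrite /hg /= e1 addn1 /= divnDl ?dvdnn // divnn dpos divn_small //=.
  by congr Some; apply: val_inj; rewrite /= modnDl modn_small.
have zn : 0 < n by apply: leq_trans h.
apply/imsetP; exists (Ordinal zn); first by rewrite inE /hrel /= e1 div0n.
by rewrite /hg.
Qed.

Lemma ball_card (T : finType) (e : rel T) t0 d :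
  1 < d -> symmetric e -> (forall v, degree e v <= d) ->
  forall h, #|ball e t0 h| <= h.+1 * d * d.-1 ^ h.
Proof.
move=> d1 es hd; elim=> [|h IH].
  by rewrite cards1 expn0 muln1 mul1n ltnW.
have sub : ball e t0 h.+1 \subset ball e t0 h :|: layer e t0 h.
  apply/subsetP=> u uB; rewrite inE /layer inE uB andbT.
  by case: (u \in ball e t0 h).
apply: leq_trans (subset_leq_card sub) _.
apply: leq_trans (leq_card_setU _ _) _.
apply: leq_trans (leq_add IH (layer_le t0 es hd h)) _.
have p1 : 0 < d.-1 by case: d d1 {hd IH} => [|[]].
have -> : h.+1 * d * d.-1 ^ h + d * d.-1 ^ h = h.+2 * (d * d.-1 ^ h).
  by rewrite [h.+2 * _]mulSnr mulnA.
by rewrite expnSr !mulnA leq_pmulr.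
Qed.

Lemma part_ball d n (T : finType) (eT : rel T) (P : T -> {set 'I_n}) (z : 'I_n) t0 :
  0 < d -> z = 0 :> nat -> is_Tpartition (@hrel d n) eT P -> z \in P t0 ->
  forall k (i : 'I_n), i < d ^ k -> forall t, i \in P t -> t \in ball eT t0 k.
Proof.
move=> dpos z0 [disj cov edg] zt0.
have root : forall (i : 'I_n) t, i = 0 :> nat -> i \in P t -> t = t0.
  move=> i t i0 it; have iz : i = z by apply: val_inj; rewrite /= i0 z0.
  apply/eqP; apply/negPn/negP=> ne; have := disj _ _ ne.
  by rewrite disjoint_subset => /subsetP/(_ i it); rewrite inE iz zt0.
elim=> [|k IH] i ik t it.
  by rewrite (root i t _ it) ?inE //; move: ik; rewrite expn0; case: (nat_of_ord i).
case: (posnP i) => [i0|ipos].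
  by rewrite (root i t i0 it); apply: (subsetP (ball_sub _ _ _)); apply: (IH z) zt0; rewrite z0 expn_gt0 dpos.
have pn : i.-1 %/ d < n by exact: ltn_trans (par_lt d ipos) (ltn_ord i).
have [s ps] := cov (Ordinal pn).
have sB : s \in ball eT t0 k.
  apply: IH ps; rewrite /= ltn_divLR // -expnSr.
  by apply: leq_ltn_trans ik; rewrite leq_pred.
have := edg _ _ _ _ _ ps it; rewrite /hrel /= ipos eqxx /= => /(_ isT) [<-|est].
  by apply: (subsetP (ball_sub _ _ _)).
by rewrite inE; apply/orP; right; rewrite inE; apply/existsP; exists s; rewrite sB.
Qed.

Lemma cover_bound (X T : finType) (P : T -> {set X}) (B : {set T}) :
  (forall v : X, exists t, v \in P t) -> (forall v t, v \in P t -> t \in B) ->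
  #|X| <= #|B| * width P.
Proof.
move=> cov inB.
have sub : [set: X] \subset \bigcup_(t in B) P t.
  apply/subsetP=> v _; have [t vt] := cov v; apply/bigcupP; exists t => //; exact: inB vt.
rewrite -cardsT; apply: leq_trans (subset_leq_card sub) _.
apply: leq_trans (card_bigcup_le _ _) _.
rewrite -sum_nat_const; apply: leq_sum => t _.
by rewrite /width; apply: (@leq_bigmax _ (fun t => #|P t|)).
Qed.

Lemma width_bound d h (T : finType) (eT : rel T) (P : T -> {set 'I_(d ^ h)}) :
  1 < d -> symmetric eT -> (forall v, degree eT v <= d) ->
  is_Tpartition (@hrel d (d ^ h)) eT P ->
  d ^ h <= (h.+1 * d * d.-1 ^ h) * width P.
Proof.
move=> d1 es hd tp.
have dpos : 0 < d by exact: ltnW.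
have zn : 0 < d ^ h by rewrite expn_gt0 dpos.
set z : 'I_(d ^ h) := Ordinal zn.
have [cov1 cov2 cov3] := tp.
have [t0 zt0] := cov2 z.
have := @cover_bound _ _ P (ball eT t0 h) cov2.
rewrite card_ord => H.
apply: leq_trans (H _) _.
  move=> v t vt; exact: (@part_ball d (d ^ h) T eT P z t0 dpos (erefl _) tp zt0 h v (ltn_ord v) t vt).
by rewrite leq_mul2r ball_card ?orbT.
Qed.

Lemma X_props d h : 1 < d -> 2 < h ->
  is_tree (@hrel d (d ^ h)) /\ max_degree_eq (@hrel d (d ^ h)) d.+1.
Proof.
move=> d1 h2; have dpos : 0 < d by exact: ltnW.
have zn : 0 < d ^ h by rewrite expn_gt0 dpos.
have big : d.*2 < d ^ h.
  apply: leq_trans (_ : d ^ 3 <= d ^ h); last by rewrite leq_pexp2l.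
  rewrite -muln2 expnS ltn_mul2l dpos /= (@leq_trans (2 * 2)) //.
  by rewrite expnS expn1 leq_mul.
have on : 1 < d ^ h by apply: leq_ltn_trans big; rewrite -addnn (leq_trans dpos) // leq_addr.
split; last first.
  split; first by move=> v; exact: hdeg_le.
  by exists (Ordinal on); exact: hdeg_1.
split.
- by split; [exact: hrel_sym | exact: hrel_irr].
- by rewrite card_ord.
- move=> x y; apply: (connect_trans (hconnect d (z := Ordinal zn) (erefl _) x)).
  by rewrite (sym_connect_sym (@hrel_sym d _)); exact: hconnect.
- exact: hacyclic.
Qed.

From Stdlib Require Import Reals.
From Stdlib Require Import Reals Lra Lia.
From mathcomp Require Import zify.


Lemma INR_expn m n : INR (expn m n) = (INR m ^ n)%R.
Proof. elim: n => [|n IH]; first by rewrite expn0. by rewrite expnS -multE mult_INR IH. Qed.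

Lemma INR_muln a b : INR (muln a b) = (INR a * INR b)%R.
Proof. by rewrite -multE mult_INR. Qed.

Open Scope R_scope.

Lemma key (d : nat) (a : R) : (1 < d)%nat -> 0 < a -> a < 1 ->
  ln (INR d - 1) < (1 - a) * ln (INR d) ->
  forall N : nat, exists h : nat, (N <= h)%nat /\ (2 < h)%nat /\
    INR (muln (muln h.+1 d) (expn d.-1 h)) <= Rpower (INR (expn d h)) (1 - a).
Proof.
move=> d1 a0 a1 hl N.
have d0 : (0 < d)%nat by apply: ltnW.
set D := INR d.
have DD : D = INR d.-1 + 1 by rewrite /D -{1}(prednK d0) S_INR.
have D2 : 2 <= D by rewrite /D; apply: (le_INR 2); apply/leP.
set b := (1 - a) * ln D - ln (D - 1).
have b0 : 0 < b by rewrite /b; apply/Rlt_0_minus.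
have [M HM] := INR_unbounded (4 * (D + 1) / (b * b)).
exists (N + d + M).+3; split; first by lia.
split; first by [].
set h := (N + d + M).+3.
have hh3 : (N + d + M < h)%nat by rewrite /h; lia.
clearbody h.
set H := INR h.
have HM' : INR M <= H by apply: le_INR; apply/leP; lia.
have HD : D <= H by apply: le_INR; apply/leP; lia.
have bb : 0 < b * b by nra.
have HB : 4 * (D + 1) <= b * b * H.
  have : 4 * (D + 1) / (b * b) < H by lra.
  move=> hh; apply Rlt_le.
  have := Rmult_lt_compat_l (b * b) _ _ bb hh.
  by rewrite /Rdiv Rmult_comm Rmult_assoc Rinv_l; [lra|lra].
have Dm : INR d.-1 = D - 1 by lra.
rewrite !INR_muln INR_expn Dm S_INR -/H -/D.
have Dm1 : 0 < D - 1 by lra.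
rewrite -(@Rpower_pow h _ Dm1) /Rpower INR_expn -/D ln_pow; last by lra.
have -> : (1 - a) * (INR h * ln D) = H * ln (D - 1) + b * H by rewrite /b -/H; ring.
rewrite exp_plus.
have e0 := exp_pos (INR h * ln (D - 1)).
rewrite -/H in e0 *.
suff : (H + 1) * D <= exp (b * H) by move=> hh; nra.
have -> : b * H = b * H / 2 + b * H / 2 by field.
rewrite exp_plus.
have ex := exp_ineq1_le (b * H / 2).
have H0 : 0 <= H by lra.
have bH : 0 <= b * H by nra.
nra.
Qed.

Lemma general (d : nat) (a : R) : (1 < d)%nat -> 0 < a -> a < 1 ->
  ln (INR d - 1) < (1 - a) * ln (INR d) ->
  forall N : nat, exists (X : finType) (eX : rel X),
    [/\ is_tree eX, max_degree_eq eX d.+1, (N <= #|X|)%nat & wide_for eX d.+1 a].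
Proof.
move=> d1 a0 a1 hl N; have [h [Nh [h2 Hb]]] := key d1 a0 a1 hl N.
have [tr md] := X_props d1 h2.
exists 'I_(expn d h), (@hrel d (expn d h)); split => //.
  by rewrite card_ord; apply: leq_trans Nh (ltnW (ltn_expl h d1)).
move=> T eT [[es _] _ _ _] hdeg P tp.
have wb := @width_bound d h T eT P d1 es (fun v => hdeg v) tp.
set n := INR (expn d h) in Hb *.
rewrite card_ord -/n.
set w := INR (width P).
have n0 : 0 < n.
  by rewrite /n; apply: (lt_INR 0); apply/ltP; rewrite expn_gt0 ltnW.
have e1 : n <= INR (muln (muln h.+1 d) (expn d.-1 h)) * w.
  by rewrite /w -INR_muln; apply: le_INR; apply/leP.
have w0 : 0 <= w by apply: pos_INR.
have np : n = Rpower n a * Rpower n (1 - a).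
  by rewrite -Rpower_plus; replace (a + (1 - a)) with 1 by ring; rewrite Rpower_1.
have p0 : 0 < Rpower n (1 - a) by apply: exp_pos.
have : Rpower n (1 - a) * Rpower n a <= Rpower n (1 - a) * w.
  rewrite Rmult_comm -np; apply: Rle_trans e1 _.
  by apply: Rmult_le_compat_r.
by apply: Rmult_le_reg_l.
Qed.

Close Scope R_scope.

Theorem proposition4 :
  (forall Delta : nat, 3 <= Delta ->
     exists alpha : R, (0 < alpha)%R /\
       forall N : nat, exists (X : finType) (eX : rel X),
         [/\ is_tree eX, max_degree_eq eX Delta, N <= #|X|
           & wide_for eX Delta alpha])
  /\
  (forall alpha : R, (0 < alpha)%R -> (alpha < 1)%R ->
     forall N : nat, exists (X : finType) (eX : rel X),
       [/\ is_tree eX, max_degree_eq eX 3, N <= #|X|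
         & wide_for eX 3 alpha]).
Proof.
Open Scope R_scope.
split.
  move=> Delta D3.
  have d1 : (1 < Delta.-1)%nat by case: Delta D3 => [|[|[|]]].
  have eD : Delta = Delta.-1.+1 by case: Delta D3 d1.
  set d := Delta.-1 in d1 eD *.
  set D := INR d.
  have D2 : 2 <= D by rewrite /D; apply: (le_INR 2); apply/leP.
  set L := ln D. set l := ln (D - 1).
  have L0 : 0 < L by rewrite /L -ln_1; apply: ln_increasing; lra.
  have l0 : 0 <= l.
    have [lt|eq] : 1 < D - 1 \/ 1 = D - 1 by lra.
      by rewrite /l -ln_1; apply: Rlt_le; apply: ln_increasing; lra.
    by rewrite /l -eq ln_1; lra.
  have lL : l < L by rewrite /l /L; apply: ln_increasing; lra.
  exists ((L - l) / (2 * L)); split.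
    by apply: Rdiv_lt_0_compat; lra.
  rewrite eD; apply: general => //.
  - by apply: Rdiv_lt_0_compat; lra.
  - have hA : (L - l) / (2 * L) * (2 * L) = L - l by field; lra.
    nra.
  - have -> : (1 - (L - l) / (2 * L)) * L = (L + l) / 2 by field; lra.
    rewrite -/D -/L -/l; lra.
move=> alpha a0 a1 N.

apply: general => //.
have -> : INR 2 - 1 = 1 by simpl; lra.
rewrite ln_1; apply: Rmult_lt_0_compat; first by lra.
by rewrite -ln_1; apply: ln_increasing; simpl; lra.
Qed.
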